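(* (Destructor to consumer case.) Let $P$ be a FOOD program with global context $\Delta$, translated by $\Delta;\Gamma\vdash P\Rightarrow T_0\leadsto P'$, with $P'$ having global context $\Delta'$ (components written with a prime). If $C\in\textsc{Gen}(D)$, $f\in\textsc{Dtr}(D)$, $\textsc{dtrBody}(f,C)=(\overline y,\overline x,e)$ and $\Delta;\Gamma\vdash e\Rightarrow T\leadsto e'$, then $C\in\textsc{Ctr}'(D)$, $f\in\textsc{Csm}'(D)$ and $\textsc{csmBody}'(f,C)=(\overline y,\overline x,[\texttt{this}\mapsto\texttt{self}]e')$.
   Context: FOOD programs consist of definitions followed by an expression. Definitions: datatypes $\texttt{data}\ D$; interfaces $\texttt{interface}\ D\{\overline{Dtr}\}$ with destructors (declarations $\texttt{def}\ f(\overline{x:T}):T$ or functions $\texttt{def}\ f(\overline{x:T}):T=e$ giving a default body); constructors $\texttt{case}\ C(\overline{x:T})\ \texttt{extends}\ D$; generators $\texttt{class}\ C(\overline{x:T})\ \texttt{implements}\ D\{\overline{Fun}\}$; consumers $\texttt{def}\ f(\texttt{self}:D)(\overline{x:T}):T=\overline{\texttt{case}\ P\Rightarrow e}$ with patterns $C(\overline x)$ or $\_$. Global context: $\textsc{Ctr}(D)$, $\textsc{Gen}(D)$, $\textsc{Dtr}(D)$, $\textsc{Csm}(D)$ the constructors, generators, destructors and consumers of $D$. Lookups: $\textsc{dtrBody}(f,C)=(\overline y,\overline x,e)$ if $\texttt{class}\ C(\overline{y:T})\ \texttt{implements}\ D$ contains $\texttt{def}\ f(\overline{x:T}):T=e$,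 and $(\varnothing,\overline x,e)$ if instead interface $D$ contains $\texttt{def}\ f(\overline{x:T}):T=e$; $\textsc{csmBody}(f,C)=(\overline y,\overline x,e)$ if consumer $f$ has clause $\texttt{case}\ C(\overline y)\Rightarrow e$, and $(\varnothing,\overline x,e)$ if it has clause $\texttt{case}\ \_\Rightarrow e$. $[a\mapsto b]e$ is substitution. The translation $\Delta;\Gamma\vdash\cdot\Rightarrow T\leadsto\cdot$ maps each transformed interface $D$ to $\texttt{data}\ D$ with, for each destructor $\texttt{def}\ f(\overline{x:T}):T[=e_0]$, a consumer $\texttt{def}\ f(\texttt{self}:D)(\overline{x:T}):T$ whose clauses are $\texttt{case}\ C(\overline y)\Rightarrow[\texttt{this}\mapsto\texttt{self}]e'$ for each generator $C(\overline{y:S})$ of $D$ containing $\texttt{def}\ f(\overline{x:T}):T=e$ where $\Gamma,\overline{y:S},\overline{x:T}\vdash e\Rightarrow T\leadsto e'$ (rule Fun2Case), plus, when the default $e_0$ exists, $\texttt{case}\ \_\Rightarrow[\texttt{this}\mapsto\texttt{self}]e_0'$ with $\Gamma,\overline{x:T}\vdash e_0\Rightarrow T\leadsto e_0'$ (rule Fun2Csm); generators of $D$ become constructors $\texttt{case}\ C(\overline{x:T})\ \texttt{extends}\ D$. Expressions are translated type-directedly: destructor selections $e_1.f(\overline{e_2})$ on transformed interfaces become consumer applications $f(e_1')(\overline{e_2'})$, consumer applications on transformed datatypes become selections, $\texttt{new}\ C(\overline e)$ becomes $C(\overline{e'})$ for generators of transformed interfaces and $C(\overline e)$ becomes $\texttt{new}\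 C(\overline{e'})$ for constructors of transformed datatypes; other forms translate subexpressions only. *)

(* Defs.v *)
From Stdlib Require Import String List Bool.
Import ListNotations.


Definition name := string.
Definition var := string.    (* variables; "this" and "self" are ordinary variables *)

(* Types T are type names D (of a datatype or an interface). *)
Inductive expr : Type :=
| EVar  (x : var)
| ESel  (e : expr) (f : name) (es : list expr)   (* e.f(es) : destructor selection *)
| ECsm  (f : name) (e : expr) (es : list expr)   (* f(e)(es) : consumer application *)
| ENew  (C : name) (es : list expr)              (* new C(es) : generator instance *)
| ECtor (C : name) (es : list expr).             (* C(es) : constructor application *)

Definition params := list (var * name).

(* destructor of an interface: def f(xs):T   or   def f(xs):T = e *)
Inductive dtr : Type := Dtr (f : name) (xs : params) (T : name) (body : option expr).
Inductive fn : Type := Fn (f : name) (xs : params) (T : name) (body : expr).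
Inductive pat : Type := PCtor (C : name) (ys : list var) | PWild.

Inductive def : Type :=
| DData (D : name)
| DIntf (D : name) (ds : list dtr)
| DCtor (C : name) (ys : params) (D : name)                 (* case C(ys) extends D *)
| DGen  (C : name) (ys : params) (D : name) (fs : list fn)  (* class C(ys) implements D { fs } *)
| DCsm  (f : name) (D : name) (xs : params) (T : name)
        (cls : list (pat * expr)).                          (* def f(self:D)(xs):T = cls *)

Definition program : Type := (list def * expr)%type.
Definition gctx := list def.
Definition tctx := list (var * name). (* local typing context Gamma; later bindings shadow *)

Definition prog_ctx (P : program) : gctx := fst P.

Fixpoint subst (a : var) (b : expr) (e : expr) : expr :=
  match e with
  | EVar x => if String.eqb x a then b else EVar x
  | ESel e0 f es => ESel (subst a b e0) f (map (subst a b) es)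
  | ECsm f e0 es => ECsm f (subst a b e0) (map (subst a b) es)
  | ENew C es => ENew C (map (subst a b) es)
  | ECtor C es => ECtor C (map (subst a b) es)
  end.

Definition this_to_self (e : expr) : expr := subst "this"%string (EVar "self"%string) e.
Definition self_to_this (e : expr) : expr := subst "self"%string (EVar "this"%string) e.

Definition Ctr (Δ : gctx) (D C : name) : Prop := exists ys, In (DCtor C ys D) Δ.
Definition Gen (Δ : gctx) (D C : name) : Prop := exists ys fs, In (DGen C ys D fs) Δ.
Definition Dtr_ (Δ : gctx) (D f : name) : Prop :=
  exists ds xs T b, In (DIntf D ds) Δ /\ In (Dtr f xs T b) ds.
Definition Csm (Δ : gctx) (D f : name) : Prop :=
  exists xs T cls, In (DCsm f D xs T cls) Δ.

Fixpoint lookup (x : var) (Γ : tctx) : option name :=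
  match Γ with
  | [] => None
  | (y, T) :: Γ' =>
      match lookup x Γ' with
      | Some T' => Some T'
      | None => if String.eqb y x then Some T else None
      end
  end.

Fixpoint find_intf (Δ : gctx) (D : name) : option (list dtr) :=
  match Δ with
  | [] => None
  | DIntf D' ds :: Δ' => if String.eqb D' D then Some ds else find_intf Δ' D
  | _ :: Δ' => find_intf Δ' D
  end.

Fixpoint find_gen (Δ : gctx) (C : name) : option (params * name * list fn) :=
  match Δ with
  | [] => None
  | DGen C' ys D fs :: Δ' => if String.eqb C' C then Some (ys, D, fs) else find_gen Δ' C
  | _ :: Δ' => find_gen Δ' C
  end.

Fixpoint find_ctor (Δ : gctx) (C : name) : option (params * name) :=
  match Δ with
  | [] => None
  | DCtor C' ys D :: Δ' => if String.eqb C' C then Some (ys, D) else find_ctor Δ' C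
  | _ :: Δ' => find_ctor Δ' C
  end.

Fixpoint find_csm (Δ : gctx) (f : name)
  : option (name * params * name * list (pat * expr)) :=
  match Δ with
  | [] => None
  | DCsm f' D xs T cls :: Δ' =>
      if String.eqb f' f then Some (D, xs, T, cls) else find_csm Δ' f
  | _ :: Δ' => find_csm Δ' f
  end.

Fixpoint find_dtr (f : name) (ds : list dtr) : option dtr :=
  match ds with
  | [] => None
  | (Dtr f' _ _ _ as d) :: ds' => if String.eqb f' f then Some d else find_dtr f ds'
  end.

Fixpoint find_fn (f : name) (fs : list fn) : option fn :=
  match fs with
  | [] => None
  | (Fn f' _ _ _ as g) :: fs' => if String.eqb f' f then Some g else find_fn f fs'
  end.

Fixpoint find_clause (C : name) (cls : list (pat * expr)) : option (list var * expr) :=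
  match cls with
  | [] => None
  | (PCtor C' ys, e) :: cls' => if String.eqb C' C then Some (ys, e) else find_clause C cls'
  | _ :: cls' => find_clause C cls'
  end.

Fixpoint find_wild (cls : list (pat * expr)) : option expr :=
  match cls with
  | [] => None
  | (PWild, e) :: _ => Some e
  | _ :: cls' => find_wild cls'
  end.

Fixpoint gens (Δ : gctx) (D : name) : list (name * params * list fn) :=
  match Δ with
  | [] => []
  | DGen C ys D' fs :: Δ' => if String.eqb D' D then (C, ys, fs) :: gens Δ' D else gens Δ' D
  | _ :: Δ' => gens Δ' D
  end.

Fixpoint csms (Δ : gctx) (D : name) : list (name * params * name * list (pat * expr)) :=
  match Δ with
  | [] => []
  | DCsm f D' xs T cls :: Δ' =>
      if String.eqb D' D then (f, xs, T, cls) :: csms Δ' D else csms Δ' D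
  | _ :: Δ' => csms Δ' D
  end.

Definition dtrBody (Δ : gctx) (f C : name) : option (list var * list var * expr) :=
  match find_gen Δ C with
  | Some (ys, D, fs) =>
      match find_fn f fs with
      | Some (Fn _ xs _ e) => Some (map fst ys, map fst xs, e)
      | None =>
          match find_intf Δ D with
          | Some ds =>
              match find_dtr f ds with
              | Some (Dtr _ xs _ (Some e)) => Some ([], map fst xs, e)
              | _ => None
              end
          | None => None
          end
      end
  | None => None
  end.

Definition csmBody (Δ : gctx) (f C : name) : option (list var * list var * expr) :=
  match find_csm Δ f with
  | Some (_, xs, _, cls) =>
      match find_clause C cls with
      | Some (ys, e) => Some (ys, map fst xs, e)
      | None =>
          match find_wild cls with
          | Some e => Some ([], map fst xs, e)
          | None => None
          end
      end
  | None => None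
  end.

(* Well-formedness of a global context: names are unique.  Destructors *)
(* and consumers share one namespace, constructors and generators      *)
(* share one namespace (the translation swaps them).                   *)

Definition type_names (Δ : gctx) : list name :=
  flat_map (fun d => match d with DData D => [D] | DIntf D _ => [D] | _ => [] end) Δ.
Definition ctor_names (Δ : gctx) : list name :=
  flat_map (fun d => match d with DCtor C _ _ => [C] | DGen C _ _ _ => [C] | _ => [] end) Δ.
Definition dtr_name (d : dtr) : name := let 'Dtr f _ _ _ := d in f.
Definition fn_name (g : fn) : name := let 'Fn f _ _ _ := g in f.
Definition fun_names (Δ : gctx) : list name :=
  flat_map (fun d => match d with
                     | DIntf _ ds => map dtr_name ds
                     | DCsm f _ _ _ _ => [f]
                     | _ => [] end) Δ.

Definition wf_ctx (Δ : gctx) : Prop :=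
  NoDup (type_names Δ) /\ NoDup (ctor_names Δ) /\ NoDup (fun_names Δ) /\
  (forall C ys D fs, In (DGen C ys D fs) Δ -> NoDup (map fn_name fs)).

(*   Δ;Γ ⊢ e ⇒ T ↝ e'   written   trans_expr Δ tr Γ e T e'              *)
(* tr D = true  iff the type D is transformed (interface -> data or     *)
(* data -> interface).                                                  *)

Inductive trans_expr (Δ : gctx) (tr : name -> bool) (Γ : tctx)
  : expr -> name -> expr -> Prop :=
| TE_Var : forall x T,
    lookup x Γ = Some T ->
    trans_expr Δ tr Γ (EVar x) T (EVar x)
| TE_Sel : forall e1 D e1' f ds xs T b es es',
    trans_expr Δ tr Γ e1 D e1' ->
    find_intf Δ D = Some ds ->
    find_dtr f ds = Some (Dtr f xs T b) ->
    trans_exprs Δ tr Γ es (map snd xs) es' ->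
    trans_expr Δ tr Γ (ESel e1 f es) T
      (if tr D then ECsm f e1' es' else ESel e1' f es')
| TE_Csm : forall e1 D e1' f xs T cls es es',
    trans_expr Δ tr Γ e1 D e1' ->
    find_csm Δ f = Some (D, xs, T, cls) ->
    trans_exprs Δ tr Γ es (map snd xs) es' ->
    trans_expr Δ tr Γ (ECsm f e1 es) T
      (if tr D then ESel e1' f es' else ECsm f e1' es')
| TE_New : forall C ys D fs es es',
    find_gen Δ C = Some (ys, D, fs) ->
    trans_exprs Δ tr Γ es (map snd ys) es' ->
    trans_expr Δ tr Γ (ENew C es) D
      (if tr D then ECtor C es' else ENew C es')
| TE_Ctor : forall C ys D es es',
    find_ctor Δ C = Some (ys, D) ->
    trans_exprs Δ tr Γ es (map snd ys) es' ->
    trans_expr Δ tr Γ (ECtor C es) D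
      (if tr D then ENew C es' else ECtor C es')
with trans_exprs (Δ : gctx) (tr : name -> bool) (Γ : tctx)
  : list expr -> list name -> list expr -> Prop :=
| TEs_nil : trans_exprs Δ tr Γ [] [] []
| TEs_cons : forall e T e' es Ts es',
    trans_expr Δ tr Γ e T e' ->
    trans_exprs Δ tr Γ es Ts es' ->
    trans_exprs Δ tr Γ (e :: es) (T :: Ts) (e' :: es').

Inductive fun2case (Δ : gctx) (tr : name -> bool) (Γ : tctx)
          (f : name) (xs : params) (T : name)
  : list (name * params * list fn) -> list (pat * expr) -> Prop :=
| F2C_nil : fun2case Δ tr Γ f xs T [] []
| F2C_skip : forall C ys fs gs cls,
    find_fn f fs = None ->
    fun2case Δ tr Γ f xs T gs cls ->
    fun2case Δ tr Γ f xs T ((C, ys, fs) :: gs) cls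
| F2C_case : forall C (ys : params) fs e e' gs cls,
    find_fn f fs = Some (Fn f xs T e) ->
    trans_expr Δ tr (Γ ++ ys ++ xs) e T e' ->
    fun2case Δ tr Γ f xs T gs cls ->
    fun2case Δ tr Γ f xs T ((C, ys, fs) :: gs)
             ((PCtor C (map fst ys), this_to_self e') :: cls).

Inductive dtr2csm (Δ : gctx) (tr : name -> bool) (Γ : tctx) (D : name)
  : dtr -> def -> Prop :=
| D2C_nodef : forall f xs T cls,
    fun2case Δ tr Γ f xs T (gens Δ D) cls ->
    dtr2csm Δ tr Γ D (Dtr f xs T None) (DCsm f D xs T cls)
| D2C_def : forall f xs T e0 e0' cls,
    fun2case Δ tr Γ f xs T (gens Δ D) cls ->
    trans_expr Δ tr (Γ ++ xs) e0 T e0' ->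
    dtr2csm Δ tr Γ D (Dtr f xs T (Some e0))
            (DCsm f D xs T (cls ++ [(PWild, this_to_self e0')])).

Inductive csm2dtr (Δ : gctx) (tr : name -> bool) (Γ : tctx)
  : (name * params * name * list (pat * expr)) -> dtr -> Prop :=
| C2D_nodef : forall f xs T cls,
    find_wild cls = None ->
    csm2dtr Δ tr Γ (f, xs, T, cls) (Dtr f xs T None)
| C2D_def : forall f xs T cls e e',
    find_wild cls = Some e ->
    trans_expr Δ tr (Γ ++ xs) e T e' ->
    csm2dtr Δ tr Γ (f, xs, T, cls) (Dtr f xs T (Some (self_to_this e'))).

Inductive case2fun (Δ : gctx) (tr : name -> bool) (Γ : tctx) (C : name) (ys : params)
  : list (name * params * name * list (pat * expr)) -> list fn -> Prop :=
| C2F_nil : case2fun Δ tr Γ C ys [] []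
| C2F_skip : forall f xs T cls cs fs,
    find_clause C cls = None ->
    case2fun Δ tr Γ C ys cs fs ->
    case2fun Δ tr Γ C ys ((f, xs, T, cls) :: cs) fs
| C2F_fun : forall f (xs : params) T cls e e' cs fs,
    find_clause C cls = Some (map fst ys, e) ->
    trans_expr Δ tr (Γ ++ ys ++ xs) e T e' ->
    case2fun Δ tr Γ C ys cs fs ->
    case2fun Δ tr Γ C ys ((f, xs, T, cls) :: cs) (Fn f xs T (self_to_this e') :: fs).

Inductive trans_dtr (Δ : gctx) (tr : name -> bool) (Γ : tctx) : dtr -> dtr -> Prop :=
| TD_nodef : forall f xs T, trans_dtr Δ tr Γ (Dtr f xs T None) (Dtr f xs T None)
| TD_def : forall f xs T e e',
    trans_expr Δ tr (Γ ++ xs) e T e' ->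
    trans_dtr Δ tr Γ (Dtr f xs T (Some e)) (Dtr f xs T (Some e')).

Inductive trans_fn (Δ : gctx) (tr : name -> bool) (Γ : tctx) (ys : params) : fn -> fn -> Prop :=
| TF : forall f xs T e e',
    trans_expr Δ tr (Γ ++ ys ++ xs) e T e' ->
    trans_fn Δ tr Γ ys (Fn f xs T e) (Fn f xs T e').

Inductive trans_clause (Δ : gctx) (tr : name -> bool) (Γ : tctx) (xs : params) (T : name)
  : (pat * expr) -> (pat * expr) -> Prop :=
| TC_ctor : forall C ys ysT D e e',
    find_ctor Δ C = Some (ysT, D) ->
    length ys = length ysT ->
    trans_expr Δ tr (Γ ++ combine ys (map snd ysT) ++ xs) e T e' ->
    trans_clause Δ tr Γ xs T (PCtor C ys, e) (PCtor C ys, e')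
| TC_wild : forall e e',
    trans_expr Δ tr (Γ ++ xs) e T e' ->
    trans_clause Δ tr Γ xs T (PWild, e) (PWild, e').

Inductive trans_def (Δ : gctx) (tr : name -> bool) (Γ : tctx) : def -> list def -> Prop :=
| TDef_data_keep : forall D, tr D = false -> trans_def Δ tr Γ (DData D) [DData D]
| TDef_data_tr : forall D ds,
    tr D = true ->
    Forall2 (csm2dtr Δ tr Γ) (csms Δ D) ds ->
    trans_def Δ tr Γ (DData D) [DIntf D ds]
| TDef_intf_keep : forall D ds ds',
    tr D = false ->
    Forall2 (trans_dtr Δ tr Γ) ds ds' ->
    trans_def Δ tr Γ (DIntf D ds) [DIntf D ds']
| TDef_intf_tr : forall D ds cs,
    tr D = true ->
    Forall2 (dtr2csm Δ tr Γ D) ds cs ->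
    trans_def Δ tr Γ (DIntf D ds) (DData D :: cs)
| TDef_ctor_keep : forall C ys D,
    tr D = false -> trans_def Δ tr Γ (DCtor C ys D) [DCtor C ys D]
| TDef_ctor_tr : forall C ys D fs,
    tr D = true ->
    case2fun Δ tr Γ C ys (csms Δ D) fs ->
    trans_def Δ tr Γ (DCtor C ys D) [DGen C ys D fs]
| TDef_gen_keep : forall C ys D fs fs',
    tr D = false ->
    Forall2 (trans_fn Δ tr Γ ys) fs fs' ->
    trans_def Δ tr Γ (DGen C ys D fs) [DGen C ys D fs']
| TDef_gen_tr : forall C ys D fs,
    tr D = true -> trans_def Δ tr Γ (DGen C ys D fs) [DCtor C ys D]
| TDef_csm_keep : forall f D xs T cls cls',
    tr D = false ->
    Forall2 (trans_clause Δ tr Γ xs T) cls cls' ->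
    trans_def Δ tr Γ (DCsm f D xs T cls) [DCsm f D xs T cls']
| TDef_csm_tr : forall f D xs T cls,
    tr D = true -> trans_def Δ tr Γ (DCsm f D xs T cls) [].

(* Δ;Γ ⊢ P ⇒ T0 ↝ P'  with Δ the global context of P *)
Definition trans_prog (tr : name -> bool) (Γ : tctx) (P : program) (T0 : name)
           (P' : program) : Prop :=
  exists dss,
    Forall2 (trans_def (fst P) tr Γ) (fst P) dss /\
    fst P' = concat dss /\
    trans_expr (fst P) tr Γ (snd P) T0 (snd P').

(* Main.v *)
Require Import Defs.
From Stdlib Require Import String List Bool.
Import ListNotations.

Lemma nodup_app_disj {A} (l1 l2 : list A) x :
  NoDup (l1 ++ l2) -> In x l1 -> In x l2 -> False.
Proof.
  induction l1 as [|a l1 IH]; simpl; intros Hn H1 H2; [easy|].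
  inversion Hn; subst. destruct H1 as [<-|H1].
  - apply H3, in_or_app; auto.
  - eauto.
Qed.

Lemma flat_map_uniq {A B} (g : A -> list B) L a b x :
  NoDup (flat_map g L) -> In a L -> In b L -> In x (g a) -> In x (g b) -> a = b.
Proof.
  induction L as [|c L IH]; simpl; intros Hn Ha Hb Hxa Hxb; [easy|].
  destruct Ha as [<-|Ha]; destruct Hb as [<-|Hb]; auto.
  - exfalso. eapply nodup_app_disj; eauto. apply in_flat_map; eauto.
  - exfalso. eapply nodup_app_disj; eauto. apply in_flat_map; eauto.
  - eapply IH; eauto. eapply NoDup_app_remove_l; eauto.
Qed.

Lemma flat_map_nodup_in {A B} (g : A -> list B) L a :
  NoDup (flat_map g L) -> In a L -> NoDup (g a).
Proof.
  induction L as [|c L IH]; simpl; intros Hn Ha; [easy|].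
  destruct Ha as [<-|Ha].
  - eapply NoDup_app_remove_r; eauto.
  - apply IH; auto. eapply NoDup_app_remove_l; eauto.
Qed.

Lemma map_uniq {A B} (g : A -> B) L a b :
  NoDup (map g L) -> In a L -> In b L -> g a = g b -> a = b.
Proof.
  induction L as [|c L IH]; simpl; intros Hn Ha Hb He; [easy|].
  inversion Hn; subst.
  destruct Ha as [<-|Ha]; destruct Hb as [<-|Hb]; auto.
  - exfalso. apply H1. rewrite He. apply in_map; auto.
  - exfalso. apply H1. rewrite <- He. apply in_map; auto.
Qed.

Lemma Forall2_in_l {A B} (R : A -> B -> Prop) l1 l2 a :
  Forall2 R l1 l2 -> In a l1 -> exists b, In b l2 /\ R a b.
Proof.
  induction 1; simpl; intros Ha; [easy|].
  destruct Ha as [<-|Ha]; [eauto|]. destruct (IHForall2 Ha) as (b&?&?); eauto.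
Qed.

Lemma Forall2_in_r {A B} (R : A -> B -> Prop) l1 l2 b :
  Forall2 R l1 l2 -> In b l2 -> exists a, In a l1 /\ R a b.
Proof.
  induction 1; simpl; intros Hb; [easy|].
  destruct Hb as [<-|Hb]; [eauto|]. destruct (IHForall2 Hb) as (a&?&?); eauto.
Qed.

Lemma find_intf_in Δ D ds : find_intf Δ D = Some ds -> In (DIntf D ds) Δ.
Proof.
  induction Δ as [|d Δ IH]; simpl; [easy|].
  destruct d; auto. destruct (String.eqb_spec D0 D); [intros [= <-]; subst; auto|auto].
Qed.

Lemma find_gen_in Δ C ys D fs : find_gen Δ C = Some (ys, D, fs) -> In (DGen C ys D fs) Δ.
Proof.
  induction Δ as [|d Δ IH]; simpl; [easy|].
  destruct d; auto. destruct (String.eqb_spec C0 C); [intros [= <- <- <-]; subst; auto|auto].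
Qed.

Lemma find_csm_in Δ f D xs T cls : find_csm Δ f = Some (D, xs, T, cls) -> In (DCsm f D xs T cls) Δ.
Proof.
  induction Δ as [|d Δ IH]; simpl; [easy|].
  destruct d; auto. destruct (String.eqb_spec f0 f); [intros [= <- <- <- <-]; subst; auto|auto].
Qed.

Lemma find_csm_some Δ f D xs T cls : In (DCsm f D xs T cls) Δ -> exists r, find_csm Δ f = Some r.
Proof.
  induction Δ as [|d Δ IH]; simpl; [easy|].
  intros [->|H]; [rewrite String.eqb_refl; eauto|].
  destruct d; auto. destruct (String.eqb f0 f); eauto.
Qed.

Lemma find_dtr_in f ds d : find_dtr f ds = Some d -> In d ds /\ dtr_name d = f.
Proof.
  induction ds as [|[f' xs T b] ds IH]; simpl; [easy|].
  destruct (String.eqb_spec f' f); [intros [= <-]; subst; auto|].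
  intros H; destruct (IH H); auto.
Qed.

Lemma gens_in Δ D C ys fs : In (C, ys, fs) (gens Δ D) -> In (DGen C ys D fs) Δ.
Proof.
  induction Δ as [|d Δ IH]; simpl; [easy|].
  destruct d; auto. destruct (String.eqb_spec D0 D); subst; simpl; [|auto].
  intros [[= -> -> ->]|H]; auto.
Qed.

Lemma in_gens Δ D C ys fs : In (DGen C ys D fs) Δ -> In (C, ys, fs) (gens Δ D).
Proof.
  induction Δ as [|d Δ IH]; simpl; [easy|].
  intros [->|H]; [rewrite String.eqb_refl; simpl; auto|].
  destruct d; auto. destruct (String.eqb D0 D); simpl; auto.
Qed.

Scheme te_mut := Induction for trans_expr Sort Prop
with tes_mut := Induction for trans_exprs Sort Prop.

Lemma intf_owner Δ D1 D2 ds1 ds2 f d1 d2 :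
  NoDup (fun_names Δ) ->
  find_intf Δ D1 = Some ds1 -> find_dtr f ds1 = Some d1 ->
  find_intf Δ D2 = Some ds2 -> find_dtr f ds2 = Some d2 -> D1 = D2 /\ ds1 = ds2.
Proof.
  intros Hn H1 H2 H3 H4.
  apply find_intf_in in H1, H3. apply find_dtr_in in H2 as [H2 E2]. apply find_dtr_in in H4 as [H4 E4].
  assert (E : DIntf D1 ds1 = DIntf D2 ds2).
  { eapply (flat_map_uniq _ Δ _ _ f Hn H1 H3); simpl.
    - rewrite <- E2; apply in_map; auto.
    - rewrite <- E4; apply in_map; auto. }
  injection E; auto.
Qed.

Lemma te_det Δ tr Γ1 e T1 e1 :
  NoDup (fun_names Δ) ->
  trans_expr Δ tr Γ1 e T1 e1 -> forall Γ2 T2 e2, trans_expr Δ tr Γ2 e T2 e2 -> e1 = e2.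
Proof.
  intros Hn H.
  induction H using te_mut with
    (P0 := fun es Ts es1 _ => forall Γ2 Ts2 es2, trans_exprs Δ tr Γ2 es Ts2 es2 -> es1 = es2);
    intros Γ2 T2 e2 H2; inversion H2; subst.
  - reflexivity.
  - destruct (intf_owner _ _ _ _ _ _ _ _ Hn e e0 H5 H8) as [<- <-].
    erewrite IHtrans_expr by eauto. erewrite IHtrans_expr0 by eauto. reflexivity.
  - match goal with A: find_csm _ _ = Some _ |- _ => rewrite e in A; injection A; intros; subst end.
    erewrite IHtrans_expr by eauto. erewrite IHtrans_expr0 by eauto. reflexivity.
  - match goal with A: find_gen _ _ = Some _ |- _ => rewrite e in A; injection A; intros; subst end.
    erewrite IHtrans_expr by eauto. reflexivity.
  - match goal with A: find_ctor _ _ = Some _ |- _ => rewrite e in A; injection A; intros; subst end.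
    erewrite IHtrans_expr by eauto. reflexivity.
  - reflexivity.
  - erewrite IHtrans_expr by eauto. erewrite IHtrans_expr0 by eauto. reflexivity.
Qed.

Lemma find_clause_wild C cls x :
  find_clause C (cls ++ [(PWild, x)]) = find_clause C cls.
Proof.
  induction cls as [|[[C' ys|] e] cls IH]; simpl; auto.
  destruct (String.eqb C' C); auto.
Qed.

Lemma find_wild_app cls x : find_wild cls = None -> find_wild (cls ++ [(PWild, x)]) = Some x.
Proof.
  induction cls as [|[[C' ys|] e] cls IH]; simpl; auto. discriminate.
Qed.

Section F2C.
Variables (Δ : gctx) (tr : name -> bool) (Γ : tctx) (f : name) (xs : params) (T : name).

Lemma f2c_nowild gs cls : fun2case Δ tr Γ f xs T gs cls -> find_wild cls = None.
Proof. induction 1; simpl; auto. Qed.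

Lemma f2c_none C gs cls : fun2case Δ tr Γ f xs T gs cls ->
  (forall ys' fs', In (C, ys', fs') gs -> find_fn f fs' = None) -> find_clause C cls = None.
Proof.
  induction 1; simpl; intros Hg; auto.
  - apply IHfun2case; eauto.
  - destruct (String.eqb_spec C0 C).
    + subst. rewrite (Hg ys fs) in H by auto. discriminate.
    + apply IHfun2case; eauto.
Qed.

Lemma f2c_found C ys0 fs0 g gs cls : fun2case Δ tr Γ f xs T gs cls ->
  (forall ys' fs', In (C, ys', fs') gs -> ys' = ys0 /\ fs' = fs0) ->
  In (C, ys0, fs0) gs -> find_fn f fs0 = Some g ->
  exists e0 e'', find_fn f fs0 = Some (Fn f xs T e0) /\
    trans_expr Δ tr (Γ ++ ys0 ++ xs) e0 T e'' /\
    find_clause C cls = Some (map fst ys0, this_to_self e'').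
Proof.
  induction 1; simpl; intros Hu Hin Hf; [easy| |].
  - destruct Hin as [[= -> -> ->]|Hin]; [congruence|].
    apply IHfun2case; eauto.
  - destruct (String.eqb_spec C0 C).
    + subst. destruct (Hu ys fs) as [-> ->]; auto. eauto.
    + destruct Hin as [[= -> -> ->]|Hin]; [congruence|].
      apply IHfun2case; eauto.
Qed.
End F2C.

Lemma in_concat_inv {A} (x : A) dss : In x (concat dss) -> exists ds, In ds dss /\ In x ds.
Proof. intros H; apply in_concat in H; firstorder. Qed.

Lemma in_concat_intro {A} (x : A) ds dss : In ds dss -> In x ds -> In x (concat dss).
Proof. intros; apply in_concat; eauto. Qed.

Theorem lemmaB6 (tr : name -> bool) (Γ : tctx) (P P' : program) (T0 : name)
    (D C f : name) (ys xs : list var) (e : expr) (T : name) (e' : expr) :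
  wf_ctx (prog_ctx P) ->
  tr D = true ->
  trans_prog tr Γ P T0 P' ->
  Gen (prog_ctx P) D C ->
  Dtr_ (prog_ctx P) D f ->
  dtrBody (prog_ctx P) f C = Some (ys, xs, e) ->
  trans_expr (prog_ctx P) tr Γ e T e' ->
  Ctr (prog_ctx P') D C /\ Csm (prog_ctx P') D f /\
  csmBody (prog_ctx P') f C = Some (ys, xs, this_to_self e').
Proof.
  unfold prog_ctx.
  intros (Htn & Hcn & Hfn & _) HtrD [dss [HF [HP' _]]] [ys0 [fs0 HG]]
         [ds [xs' [T' [b [HI HD]]]]] Hbody He.
  set (Δ := fst P) in *.
  assert (UG : forall ys' D' fs', In (DGen C ys' D' fs') Δ -> ys' = ys0 /\ D' = D /\ fs' = fs0).
  { intros ys' D' fs' H.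
    assert (E : DGen C ys' D' fs' = DGen C ys0 D fs0).
    { eapply (flat_map_uniq _ Δ _ _ C Hcn H HG); simpl; auto. }
    injection E; auto. }
  assert (UI : forall D2 ds2 xs2 T2 b2, In (DIntf D2 ds2) Δ -> In (Dtr f xs2 T2 b2) ds2 ->
            D2 = D /\ ds2 = ds /\ xs2 = xs' /\ T2 = T' /\ b2 = b).
  { intros D2 ds2 xs2 T2 b2 H1 H2.
    assert (E : DIntf D2 ds2 = DIntf D ds).
    { eapply (flat_map_uniq _ Δ _ _ f Hfn H1 HI); simpl.
      - change f with (dtr_name (Dtr f xs2 T2 b2)). apply in_map; auto.
      - change f with (dtr_name (Dtr f xs' T' b)). apply in_map; auto. }
    injection E as -> ->.
    assert (Hnd : NoDup (map dtr_name ds)) by exact (flat_map_nodup_in _ _ _ Hfn HI).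
    assert (E2 : Dtr f xs2 T2 b2 = Dtr f xs' T' b) by (eapply map_uniq; eauto).
    injection E2; auto. }
  split; [|split].
  -
    destruct (Forall2_in_l _ _ _ _ HF HG) as (ds1 & Hin & Htd).
    inversion Htd; subst; [congruence|].
    exists ys0. rewrite HP'. eapply in_concat_intro; eauto. simpl; auto.
  - destruct (Forall2_in_l _ _ _ _ HF HI) as (ds1 & Hin & Htd).
    inversion Htd; subst; [congruence|].
    match goal with A : Forall2 _ ds _ |- _ => destruct (Forall2_in_l _ _ _ _ A HD) as (c & Hc & Hdc) end.
    inversion Hdc; subst; do 3 eexists; rewrite HP'; eapply in_concat_intro; eauto; simpl; eauto.
  - assert (Hcl : exists cls2, find_csm (fst P') f = Some (D, xs', T', cls2) /\
                 dtr2csm Δ tr Γ D (Dtr f xs' T' b) (DCsm f D xs' T' cls2)).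
    { destruct (Forall2_in_l _ _ _ _ HF HI) as (ds1 & Hin & Htd).
      inversion Htd; subst; [congruence|].
      match goal with A : Forall2 _ ds _ |- _ => destruct (Forall2_in_l _ _ _ _ A HD) as (c & Hc & Hdc) end.
      assert (Hc' : exists D2 xs2 T2 cls2, In (DCsm f D2 xs2 T2 cls2) (fst P')).
      { inversion Hdc; subst; do 4 eexists; rewrite HP'; eapply in_concat_intro; eauto; simpl; eauto. }
      destruct Hc' as (D2 & xs2 & T2 & cls2 & Hc2).
      destruct (find_csm_some _ _ _ _ _ _ Hc2) as [[[[D3 xs3] T3] cls3] Hf3].
      exists cls3.
      pose proof (find_csm_in _ _ _ _ _ _ Hf3) as Hi3.
      rewrite HP' in Hi3. apply in_concat_inv in Hi3 as (ds5 & Hds5 & Hi5).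
      destruct (Forall2_in_r _ _ _ _ HF Hds5) as (d & Hd & Htd5).
      inversion Htd5; subst; simpl in Hi5;
        repeat match goal with
        | A : _ \/ _ |- _ => destruct A as [A|A]; try discriminate
        | A : False |- _ => destruct A end.
      + match goal with A : Forall2 _ _ _, B : In (DCsm _ _ _ _ _) _ |- _ =>
          destruct (Forall2_in_r _ _ _ _ A B) as (dd & Hdd & Hd2) end.
        inversion Hd2; subst;
        (destruct (UI _ _ _ _ _ Hd Hdd) as (? & ? & ? & ? & ?); subst; split; [auto|]; auto).
      + injection Hi5; intros; subst.
        exfalso.
        match goal with A : In (DCsm ?g _ _ _ _) Δ |- _ =>
        assert (E : DCsm _ _ _ _ _ = DIntf D ds) by
        (eapply (flat_map_uniq _ Δ _ _ g Hfn A HI); simpl; auto;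
          change g with (dtr_name (Dtr g xs' T' b)); apply in_map; auto) end.
        discriminate. }
    destruct Hcl as (cls2 & Hf2 & Hd2).
    unfold csmBody. rewrite Hf2.
    assert (UGs : forall ys' fs', In (C, ys', fs') (gens Δ D) -> ys' = ys0 /\ fs' = fs0).
    { intros ys' fs' H. apply gens_in in H. destruct (UG _ _ _ H) as (? & ? & ?); auto. }
    pose proof (in_gens _ _ _ _ _ HG) as HG'.
    unfold dtrBody in Hbody.
    destruct (find_gen Δ C) as [[[ys1 D1] fs1]|] eqn:Eg; [|discriminate].
    destruct (UG _ _ _ (find_gen_in _ _ _ _ _ Eg)) as (-> & -> & ->).
    destruct (find_fn f fs0) as [[f1 xs1 T1 e1]|] eqn:Ef.
    + injection Hbody as <- <- <-.
      assert (Hx : exists cls, fun2case Δ tr Γ f xs' T' (gens Δ D) cls /\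
                 find_clause C cls2 = find_clause C cls).
      { inversion Hd2; subst; eexists; split; eauto. apply find_clause_wild. }
      destruct Hx as (cls & Hfc & ->).
      destruct (f2c_found _ _ _ _ _ _ _ _ _ _ _ _ Hfc UGs HG' Ef) as (e0 & e'' & Hf0 & Hte & Hfcl).
      rewrite Ef in Hf0. injection Hf0 as <- <- <- <-.
      rewrite Hfcl. do 3 f_equal. eapply te_det; eauto.
    + destruct (find_intf Δ D) as [ds4|] eqn:Ei; [|discriminate].
      destruct (find_dtr f ds4) as [[f4 xs4 T4 [e4|]]|] eqn:Ed; try discriminate.
      injection Hbody as <- <- <-.
      apply find_intf_in in Ei. apply find_dtr_in in Ed as [Ed Ef4]. simpl in Ef4; subst f4.
      destruct (UI _ _ _ _ _ Ei Ed) as (_ & _ & -> & -> & <-).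
      inversion Hd2 as [|? ? ? ? e0' cls Hfc Hte]; subst.
      rewrite find_clause_wild.
      rewrite (f2c_none _ _ _ _ _ _ C _ _ Hfc).
      2:{ intros ys' fs' H. destruct (UGs _ _ H) as [_ ->]; auto. }
      rewrite (find_wild_app _ _ (f2c_nowild _ _ _ _ _ _ _ _ Hfc)).
      do 3 f_equal. eapply te_det; eauto.
Qed.
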